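(* Let $p\ge5$, $n\ge0$, and let $\mu<\nu$ be two integers in $\{M_{n-1}+1,\dots,M_n\}$ whose nzm-codes both end with the digit $1$, such that no integer strictly between $\mu$ and $\nu$ has an nzm-code ending with $1$. Then $\nu-\mu=p-3$ if and only if the nzm-code of $\nu$ ends with $11$; otherwise $\nu-\mu=p-2$.
   Context: Fix $p\ge5$. Metallic numbers: $m_{-1}=0$, $m_0=1$, $m_{n+2}=(p-2)m_{n+1}-m_n$; $M_n=\sum_{k=0}^n m_k$, $M_{-1}=0$. Write $x=p-2$, $d=p-3$. The nzm-code of a positive integer $n$ is the unique word $a_k\cdots a_0$ over the digits $\{1,\dots,p-2\}$ with $n=\sum a_i m_i$ containing no factor $x\,d^j\,x$ ($j\ge0$). *)

(* Defs.v *)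
From mathcomp Require Import all_boot.
Set Implicit Arguments. Unset Strict Implicit. Unset Printing Implicit Defensive.

(* Metallic numbers m_k (k >= 0): m_0 = 1, m_1 = (p-2) m_0 - m_{-1} = p-2,
   m_{k+2} = (p-2) m_{k+1} - m_k.  (For p >= 4 the sequence is increasing,
   so truncated subtraction is exact.) *)
Fixpoint metal_aux (p k : nat) : nat * nat :=
  match k with
  | 0 => (1, p - 2)
  | k'.+1 => let: (a, b) := metal_aux p k' in (b, (p - 2) * b - a)
  end.
Definition metal (p k : nat) : nat := (metal_aux p k).1.

(* M_n = sum_{k=0}^n m_k ; M_{n-1} is written Mprev p n (with M_{-1} = 0). *)
Definition Msum (p n : nat) : nat := \sum_(k < n.+1) metal p k.
Definition Mprev (p n : nat) : nat := \sum_(k < n) metal p k.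

(* Words are lists of digits, least significant first: w = [a_0; a_1; ...; a_k]. *)
Definition word_value (p : nat) (w : seq nat) : nat :=
  \sum_(i < size w) nth 0 w i * metal p i.

(* w contains no factor x d^j x (j >= 0), x = p-2, d = p-3. *)
Definition no_forbidden (p : nat) (w : seq nat) : Prop :=
  forall i j, i + j.+1 < size w ->
    nth 0 w i = p - 2 ->
    (forall k, 0 < k <= j -> nth 0 w (i + k) = p - 3) ->
    nth 0 w (i + j.+1) <> p - 2.

Definition is_nzm_code (p : nat) (w : seq nat) (N : nat) : Prop :=
  all (fun a => (1 <= a) && (a <= p - 2)) w /\
  N = word_value p w /\ no_forbidden p w.

Definition ends1 (p N : nat) : Prop :=
  exists w, is_nzm_code p w N /\ nth 0 w 0 = 1.

Definition ends11 (p N : nat) : Prop :=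
  exists w, is_nzm_code p w N /\ nth 0 w 0 = 1 /\ nth 0 w 1 = 1.

(* Main.v *)
Require Import Defs.
From mathcomp Require Import all_boot.
From mathcomp Require Import zify.
From Stdlib Require Import Lia.
Set Implicit Arguments. Unset Strict Implicit. Unset Printing Implicit Defensive.

Lemma metal_auxS p k : metal_aux p k.+1 =
  ((metal_aux p k).2, (p-2) * (metal_aux p k).2 - (metal_aux p k).1).
Proof. by rewrite /=; case: (metal_aux p k). Qed.

Lemma metal0 p : metal p 0 = 1. Proof. by []. Qed.
Lemma metal1 p : metal p 1 = p - 2. Proof. by []. Qed.
Lemma metalSS p k : metal p k.+2 = (p-2) * metal p k.+1 - metal p k.
Proof. by rewrite /metal !metal_auxS. Qed.

Lemma metal_mono p k : 4 <= p -> metal p k <= metal p k.+1.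
Proof.
move=> hp; elim: k => [|k IH]; first by rewrite metal0 metal1; lia.
rewrite metalSS.
have h : 2 * metal p k.+1 <= (p-2) * metal p k.+1 by apply: leq_mul => //; lia.
lia.
Qed.

Lemma metal_pos p k : 4 <= p -> 1 <= metal p k.
Proof. move=> hp; elim: k => [|k IH] //; exact: leq_trans IH (metal_mono _ hp). Qed.

Lemma metal_rec p k : 4 <= p -> metal p k.+2 + metal p k = (p-2) * metal p k.+1.
Proof.
move=> hp; rewrite metalSS.
have h : metal p k.+1 <= (p-2) * metal p k.+1 by apply: leq_pmull; lia.
have := metal_mono k hp. lia.
Qed.

Fixpoint Pr p n := if n is n'.+1 then Pr p n' + metal p n' else 0.

Lemma MprevE p n : Mprev p n = Pr p n.
Proof.
elim: n => [|n IH]; first by rewrite /Mprev big_ord0.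
by rewrite /Mprev big_ord_recr /=; rewrite /Mprev in IH; rewrite IH.
Qed.

Lemma Pr_id p k : 4 <= p -> Pr p k.+2 = (p-2) * metal p k + (p-3) * Pr p k + 1.
Proof.
move=> hp; elim: k => [|k IH]; first by rewrite /= metal0 metal1; lia.
have hr := metal_rec k hp.
have e1 : (p-2) * metal p k = metal p k + (p-3) * metal p k.
  by rewrite -mulSn; congr (_ * _); lia.
have -> : Pr p k.+3 = Pr p k.+2 + metal p k.+2 by [].
rewrite IH /= mulnDr. lia.
Qed.

Lemma Pr_mono p m k : Pr p m <= Pr p (m + k).
Proof. elim: k => [|k IH]; first by rewrite addn0. rewrite addnS /=. lia. Qed.

Fixpoint vs p k (w : seq nat) : nat :=
  if w is a :: w' then a * metal p k + vs p k.+1 w' else 0.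

Lemma vs_gen p k w : \sum_(i < size w) nth 0 w i * metal p (k + i) = vs p k w.
Proof.
elim: w k => [|a w IH] k; first by rewrite big_ord0.
rewrite /= big_ord_recl /= addn0 -IH; congr (_ + _).
apply: eq_bigr => i _ /=. by rewrite addSnnS.
Qed.

Lemma vsE p w : word_value p w = vs p 0 w.
Proof. rewrite /word_value -vs_gen; apply: eq_bigr => i _; by rewrite add0n. Qed.

Lemma vs_cat p k s1 s2 : vs p k (s1 ++ s2) = vs p k s1 + vs p (k + size s1) s2.
Proof.
elim: s1 k => [|a s1 IH] k /=; first by rewrite addn0.
by rewrite IH addSnnS addnA.
Qed.

Lemma vs_nseq p k n c : vs p k (nseq n c) + c * Pr p k = c * Pr p (k + n).
Proof.
elim: n k => [|n IH] k /=; first by rewrite addn0.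
rewrite addnS -addSn -IH /= mulnDr. lia.
Qed.

Lemma vs_nseq0 p n c s : vs p 0 (nseq n c ++ s) = c * Pr p n + vs p n s.
Proof. by rewrite vs_cat -(@vs_nseq p 0 n c) /= muln0 addn0 size_nseq. Qed.

Lemma vs_rcons p k w a : vs p k (rcons w a) = vs p k w + a * metal p (k + size w).
Proof. by rewrite -cats1 vs_cat /= addn0. Qed.

Lemma vs_cons0 p c v : vs p 0 (c :: v) = c + vs p 1 v.
Proof. by rewrite /= metal0 muln1. Qed.
Fixpoint sdx p (w : seq nat) : bool :=
  if w is a :: w' then (a == p - 2) || ((a == p - 3) && sdx p w') else false.

Lemma sdxP p w : sdx p w <-> exists j, j < size w /\ nth 0 w j = p - 2 /\
   (forall k, k < j -> nth 0 w k = p - 3).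
Proof.
elim: w => [|a w IH] /=.
- split => //; by case=> j [].
- split.
  + case/orP => [/eqP ha | /andP [/eqP ha /IH [j [hj [hx hd]]]]].
    * by exists 0.
    * exists j.+1; split => //; split => //. by case=> [|k] hk //=; apply: hd.
  + case=> [[|j]] [hj [hx hd]] /=.
    * by rewrite /= in hx; rewrite hx eqxx.
    * apply/orP; right; apply/andP; split; first by have := hd 0 isT; rewrite /= => ->.
      apply/IH; exists j; split => //; split => // k hk; exact: (hd k.+1 hk).
Qed.

Lemma nf_nil p : no_forbidden p [::].
Proof. by move=> i j. Qed.

Lemma nf_cons p a w : no_forbidden p (a :: w) <-> no_forbidden p w /\ (a = p-2 -> ~~ sdx p w).
Proof.
split.
- move=> H; split.
  + move=> i j hs hx hd. have := H i.+1 j. rewrite !addSn /=. apply => //.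
  + move=> ha; apply/negP => /sdxP [j [hj [hx hd]]].
    apply: (H 0 j) => //=.
    case=> [|k] //= hk; apply: hd; lia.
- case=> H ha i j; case: i => [|i].
  + rewrite add0n /= => hs hx hd hn.
    move/negP: (ha hx); apply; apply/sdxP; exists j; split; [lia | split => // k hk].
    have := hd k.+1; rewrite add0n /=; apply; lia.
  + move=> hs hx hd. rewrite addSn /=. apply: H; [ by move: hs => /=; rewrite addSn; lia | exact: hx | move=> k hk; have := hd k hk; by rewrite addSn ].
Qed.

Lemma nf_rcons p w a : no_forbidden p (rcons w a) <-> no_forbidden p w /\ (a = p-2 -> ~~ sdx p (rev w)).
Proof.
have E : forall m, m < size w -> nth 0 (rcons w a) m = nth 0 w m.
  by move=> m hm; rewrite nth_rcons hm.
split.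
- move=> H; split.
  + move=> i j hs hx hd; rewrite -E //; apply: H.
    * rewrite size_rcons; lia.
    * rewrite E //; lia.
    * move=> k hk; rewrite E; [exact: hd | lia].
  + move=> ha; apply/negP => /sdxP [j [hj [hx hd]]].
    rewrite size_rev in hj. rewrite nth_rev // in hx.
    apply: (H (size w - j.+1) j).
    * rewrite size_rcons; lia.
    * rewrite E //; lia.
    * move=> k hk; rewrite E; last by lia.
      have := hd (j - k); rewrite nth_rev; last by lia.
      have -> : size w - (j - k).+1 = size w - j.+1 + k by lia.
      apply; lia.
    * have -> : size w - j.+1 + j.+1 = size w by lia.
      by rewrite nth_rcons ltnn eqxx.
- case=> H ha i j hs hx hd. rewrite size_rcons in hs.
  case: (ltnP (i + j.+1) (size w)) => hlt.
  + rewrite E //; apply: H => //.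
    * rewrite -E //; lia.
    * move=> k hk; rewrite -E; [exact: hd | lia].
  + have hij : i + j.+1 = size w by lia.
    rewrite hij nth_rcons ltnn eqxx => hn.
    move/negP: (ha hn); apply; apply/sdxP.
    exists j; split; first by rewrite size_rev; lia.
    split.
    * rewrite nth_rev; last by lia.
      have -> : size w - j.+1 = i by lia.
      rewrite -E; [exact: hx | lia].
    * move=> k hk; rewrite nth_rev; last by lia.
      have -> : size w - k.+1 = i + (j - k) by lia.
      rewrite -E; [apply: hd; lia | lia].
Qed.

Definition codeok p w := all (fun a => (1 <= a) && (a <= p - 2)) w /\ no_forbidden p w.

Lemma bounds p w : 5 <= p -> codeok p w ->
  [/\ Pr p (size w) <= vs p 0 w, vs p 0 w < Pr p (size w).+1 &
      (~~ sdx p (rev w) -> vs p 0 w <= (p-3) * Pr p (size w))].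
Proof.
move=> hp; elim/last_ind: w => [|w a IH] [hdig hnf]; first by [].
move: hdig; rewrite all_rcons => /andP [/andP [ha1 ha2] hdig].
case/nf_rcons: hnf => hnf hax.
case: (IH (conj hdig hnf)) => l1 l2 l3.
rewrite size_rcons vs_rcons add0n rev_rcons.
have hid := Pr_id (size w) (ltnW hp).
have hPS : Pr p (size w).+1 = Pr p (size w) + metal p (size w) by [].
rewrite hPS in l2 *. rewrite hid.
move: (metal_pos (size w) (ltnW hp)) => hM.
set M := metal p (size w) in hM hid hPS l2 *.
set P := Pr p (size w) in hid hPS l1 l2 l3 *.
have hPd : P <= (p-3) * P by apply: leq_pmull; lia.
have hMd : (p-2) * M = M + (p-3) * M by rewrite -mulSn; congr (_ * _); lia.
have haM : M <= a * M by apply: leq_pmull.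
have [hax'|hax'] : a = p-2 \/ a <= p-3 by lia.
- rewrite hax' /= eqxx /=. have := l3 (hax hax'). move=> h; split => //; lia.
- have h1 : a * M <= (p-3) * M by apply: leq_mul.
  split; try lia.
  rewrite /= (_ : (a == p-2) = false) /=; last by apply/eqP; lia.
  move=> hns. rewrite mulnDr.
  have [had|had] : a = p-3 \/ a <= p-4 by lia.
  + rewrite had eqxx /= in hns. have := l3 hns. rewrite had. lia.
  + have h2 : a * M <= (p-4) * M by apply: leq_mul.
    have h3 : (p-3) * M = M + (p-4) * M by rewrite -mulSn; congr (_ * _); lia.
    lia.
Qed.

Lemma size_eq p w1 w2 : 5 <= p -> codeok p w1 -> codeok p w2 -> vs p 0 w1 = vs p 0 w2 ->
  size w1 = size w2.
Proof.
move=> hp h1 h2 hv.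
case: (bounds hp h1) => a1 b1 _; case: (bounds hp h2) => a2 b2 _.
case: (ltngtP (size w1) (size w2)) => h //.
- have := @Pr_mono p (size w1).+1 (size w2 - (size w1).+1).
  rewrite subnKC //. lia.
- have := @Pr_mono p (size w2).+1 (size w1 - (size w2).+1).
  rewrite subnKC //. lia.
Qed.

Lemma uniq_code p w1 w2 : 5 <= p -> codeok p w1 -> codeok p w2 -> vs p 0 w1 = vs p 0 w2 ->
  w1 = w2.
Proof.
move=> hp h1 h2 hv; have hs := size_eq hp h1 h2 hv.
elim/last_ind: w1 w2 h1 h2 hv hs => [|w1 a IH] w2 h1 h2 hv hs.
- by case: w2 hs {h2 hv}.
- case/lastP: w2 h2 hv hs => [|w2 b] h2 hv hs; first by rewrite size_rcons in hs.
  rewrite !size_rcons in hs; case: hs => hs.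
  case: h1 => hd1 hn1; case: h2 => hd2 hn2.
  move: hd1 hd2; rewrite !all_rcons => /andP [_ hd1] /andP [_ hd2].
  case/nf_rcons: hn1 => hn1 _; case/nf_rcons: hn2 => hn2 _.
  have c1 : codeok p w1 by [].
  have c2 : codeok p w2 by [].
  case: (bounds hp c1) => l1 u1 _; case: (bounds hp c2) => l2 u2 _.
  rewrite !vs_rcons !add0n -hs in hv.
  rewrite -hs /= in u2 l2. rewrite /= in u1.
  move: (metal_pos (size w1) (ltnW hp)) => hM.
  set M := metal p (size w1) in hM hv u1 u2.
  have hab : a = b.
    case: (ltngtP a b) => h //.
    + have : a.+1 * M <= b * M by apply: leq_mul.
      rewrite mulSn. lia.
    + have : b.+1 * M <= a * M by apply: leq_mul.
      rewrite mulSn. lia.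
  subst b. have hv' : vs p 0 w1 = vs p 0 w2 by lia.
  by rewrite (IH w2 c1 c2 hv' hs).
Qed.
Lemma nf_nseq_d p n s : 5 <= p -> no_forbidden p s -> no_forbidden p (nseq n (p-3) ++ s).
Proof.
move=> hp hs; elim: n => [|n IH] //=.
apply/nf_cons; split => // hx; exfalso; lia.
Qed.

Lemma nf_cat_nseq p n c s : no_forbidden p (nseq n c ++ s) -> no_forbidden p s.
Proof. elim: n => [|n IH] //= /nf_cons [] /IH //. Qed.

Lemma codeE p w N : is_nzm_code p w N <-> codeok p w /\ N = vs p 0 w.
Proof.
rewrite /is_nzm_code /codeok vsE; split.
- by case=> a [b c].
- by case=> [[a c] b].
Qed.

Lemma gap p v e mu nu : 5 <= p -> 1 <= e ->
  (forall c, 1 <= c <= e -> codeok p (c :: v)) -> vs p 0 (1 :: v) + e = nu ->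
  ends1 p mu -> mu < nu -> (forall k, mu < k < nu -> ~ ends1 p k) -> mu = nu - e.
Proof.
move=> hp he hc hv hmu hmn hg.
have hvc : forall c, vs p 0 (c :: v) = c + vs p 1 v by move=> c; rewrite vs_cons0.
rewrite hvc in hv.
case: (ltngtP mu (nu - e)) => h //.
- exfalso; apply: (hg (nu - e)); first by lia.
  exists (1 :: v); split => //. apply/codeE; split; first by apply: hc; lia.
  rewrite hvc; lia.
- exfalso. case: hmu => wm [/codeE [hcm hvm] h0].
  have hc2 : codeok p ((mu - (nu - e) + 1) :: v) by apply: hc; lia.
  have := uniq_code hp hcm hc2. rewrite hvc -hvm => /(_ ltac:(lia)) hw.
  rewrite hw /= in h0. lia.
Qed.

Lemma decomp (w : seq nat) : exists k t, w = nseq k 1 ++ t /\ head 0 t != 1.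
Proof.
elim: w => [|a w [k [t [-> ht]]]]; first by exists 0, [::].
case: (eqVneq a 1) => [->|ha]; first by exists k.+1, t.
by exists 0, (a :: nseq k 1 ++ t).
Qed.

Lemma dig_nseq_d p n s : 5 <= p -> all (fun a => (1 <= a) && (a <= p - 2)) s ->
  all (fun a => (1 <= a) && (a <= p - 2)) (nseq n (p-3) ++ s).
Proof.
move=> hp hs; rewrite all_cat hs andbT all_nseq; apply/orP; right; apply/andP; split; lia.
Qed.

Lemma pred_struct p w : 5 <= p -> codeok p w -> nth 0 w 0 = 1 -> 2 <= vs p 0 w ->
  w != [:: 1; 1] ->
  exists e v, (e = p-3 \/ e = p-2) /\ (forall c, 1 <= c <= e -> codeok p (c :: v)) /\
    vs p 0 (1 :: v) + e = vs p 0 w /\ (e = p-3 <-> nth 0 w 1 = 1).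
Proof.
move=> hp [hd hn] h0 h2 hw.
have hvc : forall c v, vs p 0 (c :: v) = c + vs p 1 v by move=> c v; rewrite vs_cons0.
have hid := @Pr_id p _ (ltnW hp).
have hx : forall c, 1 <= c <= p - 3 -> c = p-2 -> False by move=> c hc hc'; lia.
case: (decomp w) => k [t [hwe ht]].
case: k hwe => [|k] hwe.
  by rewrite hwe in h0; case: t ht hwe h0 => [|b r] //= /eqP.
case: t ht hwe => [|b r] ht hwe.
-
  rewrite cats0 in hwe.
  case: k hwe => [|[|k]] hwe.
  + by rewrite hwe /= metal0 in h2.
  + by rewrite hwe eqxx in hw.
  + exists (p-3), (nseq k (p-3) ++ [:: p-2]).
    split; first by left.
    split.
    * move=> c hc; split.
      - rewrite /= (_ : (1 <= c) && (c <= p-2)) /=; last by apply/andP; lia.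
        by apply: dig_nseq_d => //=; rewrite andbT; apply/andP; lia.
      - apply/nf_cons; split; last by move=> /(hx c hc).
        apply: nf_nseq_d => //; apply/nf_cons; split; first exact: nf_nil.
        by [].
    * split; last by rewrite hwe.
      have e1 : vs p 0 (1 :: nseq k (p - 3) ++ [:: p - 2]) + (p - 3) =
                vs p 0 (nseq k.+1 (p - 3) ++ [:: p - 2]) + 1.
        rewrite (_ : nseq k.+1 (p-3) ++ [:: p-2] = (p-3) :: (nseq k (p-3) ++ [:: p-2])) //.
        rewrite !hvc; lia.
      rewrite e1 hwe -[nseq k.+3 1]cats0 !vs_nseq0 /=.
      have := hid k.+1; rewrite /= mul1n; lia.
-
  have hb : b != 1 by [].
  have hnbr : no_forbidden p (b :: r) by apply: (@nf_cat_nseq p k.+1 1); rewrite -hwe.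
  case/nf_cons: hnbr => hnr hbx.
  rewrite hwe all_cat in hd; case/andP: hd => _ /= /andP [/andP [hb1 hb2] hdr].
  have hb1' : 2 <= b by move: hb => /eqP; lia.
  have hnv : no_forbidden p ((b-1) :: r).
    by apply/nf_cons; split => // ?; exfalso; lia.
  have hsv : ~~ sdx p ((b-1) :: r).
    rewrite /=; apply/negP => /orP [/eqP h | /andP [/eqP h hs]]; first lia.
    have : b = p - 2 by lia.
    by move/hbx; rewrite hs.
  have hdv : all (fun a => (1 <= a) && (a <= p - 2)) ((b-1) :: r).
    by rewrite /= hdr andbT; apply/andP; lia.
  case: k hwe => [|k] hwe.
  + exists (p-2), ((b-1) :: r).
    split; first by right.
    split.
    * move=> c hc; split.
      - by rewrite /= -/(all _ r); apply/andP; split; [apply/andP; lia | exact: hdv].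
      - apply/nf_cons; split => // _; exact: hsv.
    * split; last first.
        rewrite hwe /=; split => h; [exfalso; lia | by move: hb; rewrite h].
      rewrite hwe /= metal0 metal1 !muln1.
      case: b hb1' {ht hb hb1 hb2 hbx hnv hsv hdv hwe} => [|B] // hB.
      rewrite subn1 /= mulSn. lia.
  + exists (p-3), (nseq k (p-3) ++ [:: p-2, b-1 & r]).
    split; first by left.
    split.
    * move=> c hc; split.
      - rewrite /= (_ : (1 <= c) && (c <= p-2)) /=; last by apply/andP; lia.
        apply: dig_nseq_d => //=; rewrite -/(all _ ((b-1) :: r)) hdv andbT.
        apply/andP; lia.
      - apply/nf_cons; split; last by move=> /(hx c hc).
        apply: nf_nseq_d => //; apply/nf_cons; split => // _; exact: hsv.
    * split; last by rewrite hwe.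
      have e1 : vs p 0 (1 :: nseq k (p - 3) ++ [:: p - 2, b - 1 & r]) + (p - 3) =
                vs p 0 (nseq k.+1 (p - 3) ++ [:: p - 2, b - 1 & r]) + 1.
        rewrite (_ : nseq k.+1 (p-3) ++ [:: p-2, b-1 & r] = (p-3) :: (nseq k (p-3) ++ [:: p-2, b-1 & r])) //.
        rewrite !hvc; lia.
      rewrite e1 hwe !vs_nseq0 /=.
      have := hid k.+1.
      case: b hb1' {ht hb hb1 hb2 hbx hnv hsv hdv hwe e1} => [|B] // hB.
      rewrite subn1 /= !mulSn mul0n /=. lia.
Qed.
Theorem lemma11 (p n mu nu : nat) :
  5 <= p ->
  Mprev p n < mu -> mu < nu -> nu <= Msum p n ->
  ends1 p mu -> ends1 p nu ->
  (forall k, mu < k < nu -> ~ ends1 p k) ->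
  (nu - mu = p - 3 <-> ends11 p nu) /\ (~ ends11 p nu -> nu - mu = p - 2).
Proof.
move=> hp hlo hmn hhi hmu hnu hgap.
case: (hnu) => w [/codeE [hc hv] h0].
have h11 : ends11 p nu <-> nth 0 w 1 = 1.
  split.
  - case=> w' [/codeE [hc' hv'] [h0' h1']].
    have := uniq_code hp hc' hc. rewrite -hv' -hv => /(_ erefl) <-. done.
  - move=> h1; exists w; split => //; exact/codeE.
have nu2 : 2 <= vs p 0 w by lia.
case: (eqVneq w [:: 1; 1]) => hw.
- exfalso.
  have hnu' : nu = p - 1 by rewrite hv hw /= metal0 metal1; lia.
  have hm : mu = nu - (p-2).
    apply: (@gap p [::] (p-2) mu nu) => //; first by lia.
    + move=> c hc1; split; first by rewrite /= andbT.
      apply/nf_cons; split; [exact: nf_nil | by []].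
    + by rewrite /= metal0; lia.
  case: n hlo hhi => [|n] hlo hhi.
  + move: hhi; rewrite /Msum big_ord1 metal0. lia.
  + move: hlo; rewrite MprevE /=. have := metal_pos n (ltnW hp). lia.
- have [e [v [he [hcv [hval hiff]]]]] := pred_struct hp hc h0 nu2 hw.
  have hm : mu = nu - e.
    apply: (@gap p v e mu nu) => //; first by lia.
    by rewrite hval hv.
  have -> : nu - mu = e by move: hval; rewrite -hv; lia.
  rewrite h11 -hiff. split => // hne. case: he => // he'; by exfalso; apply: hne.
Qed.
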